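(* Let $r$ be an ELP rule of the form $A \leftarrow B, \neg C, \mathbf{not}\, D, \mathbf{not}\,\neg E, \neg\mathbf{not}\, F, \neg\mathbf{not}\,\neg G$, where $A,B,C,D,E,F,G$ are finite sets of atoms. Then $r$ is tautological if and only if at least one of the following holds: (a) $A \cap B \neq \emptyset$; (b) $B \cap (C \cup G) \neq \emptyset$; (c) $C \cap F \neq \emptyset$; (d) $D \cap F \neq \emptyset$; (e) $E \cap G \neq \emptyset$; (f) $F\cap G\neq\emptyset$.
   Context: Notation for the rule: the head is the disjunction of the atoms in $A$; the body is the conjunction of the atoms in $B$, the literals $\neg c$ ($c\in C$), the epistemic literals $\mathbf{not}\,d$ ($d\in D$), $\mathbf{not}\,\neg e$ ($e\in E$), and the negated epistemic literals $\neg\mathbf{not}\,f$ ($f\in F$), $\neg\mathbf{not}\,\neg g$ ($g\in G$). Definitions: a literal over atoms $\mathcal{A}$ is $a$ or $\neg a$; interpretations $I\subseteq\mathcal{A}$, $I\models a$ iff $a\in I$, $I\models\neg\ell$ iff $I\not\models\ell$. A plain logic program $(\mathcal{A},\mathcal{R})$ has rules $a_1\vee\cdots\vee a_l\leftarrow a_{l+1},\ldots,a_m,\neg\ell_1,\ldots,\neg\ell_n$; $M\models r$ iff body true implies some head atom in $M$. GL-reduct $\Pi^I$ keeps $H(r)\leftarrow B^+(r)$ (positive body atoms) for rules all of whose negated body elements $\neg\ell$ are true in $I$ ($\neg\neg\neg a$ treated as $\neg a$); answer sets are models $M$ with no $M'\subset M$ modelling $\Pi^M$. An ELP is $(\mathcal{A},\mathcal{E},\mathcal{R})$,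 $\mathcal{E}$ a set of epistemic literals $\mathbf{not}\,\ell$, rules $a_1\vee\cdots\vee a_k\leftarrow\ell_1,\ldots,\ell_m,\xi_1,\ldots,\xi_j,\neg\xi_{j+1},\ldots,\neg\xi_n$ with $\xi_i\in\mathcal{E}$. A guess $\Phi\subseteq\mathcal{E}$; $\mathcal{I}$ is $\Phi$-compatible iff nonempty, each $\mathbf{not}\,\ell\in\Phi$ is falsified ($I\not\models\ell$) by some $I\in\mathcal{I}$, and each $\mathbf{not}\,\ell\in\mathcal{E}\setminus\Phi$ has $\ell$ true in all $I\in\mathcal{I}$. Epistemic reduct $\Pi^\Phi$: replace $\mathbf{not}\,\ell\in\Phi$ by $\top$ and remaining $\mathbf{not}$ by $\neg$. A candidate world view is $AS(\Pi^\Phi)$ when $\Phi$-compatible; a world view is a candidate world view with subset-maximal associated guess. ELPs $\Pi_1,\Pi_2$ are strongly equivalent iff for every ELP $\Pi$, $\Pi_1\cup\Pi$ and $\Pi_2\cup\Pi$ (componentwise union) have the same world views. An ELP rule $r$ over $\mathcal{A}$ and $\mathcal{E}$ (containing the atoms and epistemic literals of $r$) is tautological iff $(\mathcal{A},\mathcal{E},\{r\})$ is strongly equivalent to $(\mathcal{A},\mathcal{E},\emptyset)$. *)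

(* Defs.v *)
From HB Require Import structures.
From mathcomp Require Import all_boot.
From mathcomp Require Export finmap.
From Stdlib Require Lists.List.

Set Implicit Arguments.
Unset Strict Implicit.
Unset Printing Implicit Defensive.

Local Open Scope fset_scope.

Definition atom := nat.
Definition interp := {fset atom}.

(** A literal: (true, a) is the atom a, (false, a) is the literal ¬a.
    The epistemic literal [not ℓ] is identified with the literal ℓ. *)
Definition lit := (bool * atom)%type.
Definition pos_lit (a : atom) : lit := (true, a).
Definition neg_lit (a : atom) : lit := (false, a).
Definition lit_atom (l : lit) : atom := l.2.
Definition negl (l : lit) : lit := (~~ l.1, l.2).

Definition sat_litb (I : interp) (l : lit) : bool :=
  if l.1 then l.2 \in I else l.2 \notin I.
Definition sat_lit (I : interp) (l : lit) : Prop := sat_litb I l.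

(** A plain rule  H <- B+, ¬ℓ_1, ..., ¬ℓ_n : the negated body elements ¬ℓ are
    stored via ℓ, where ℓ is (true,a) for ¬a and (false,a) for ¬¬a
    (¬¬¬a is treated as ¬a, i.e. stored as (true,a)). *)
Record prule := PRule { phead : {fset atom}; ppos : {fset atom}; pneg : {fset lit} }.

Record plain_program := PProg { patoms : {fset atom}; prules : seq prule }.

Definition pbody_true (I : interp) (r : prule) : Prop :=
  ppos r `<=` I /\ (forall l, l \in pneg r -> ~ sat_lit I l).

Definition sat_prule (I : interp) (r : prule) : Prop :=
  pbody_true I r -> exists2 a, a \in phead r & a \in I.

Definition models (I : interp) (rs : seq prule) : Prop :=
  forall r, List.In r rs -> sat_prule I r.

Definition GL (I : interp) (P : plain_program) : seq prule :=
  [seq PRule (phead r) (ppos r) fset0 |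
     r <- prules P & all (fun l => ~~ sat_litb I l) (pneg r)].

Definition answer_set (P : plain_program) (M : interp) : Prop :=
  M `<=` patoms P /\ models M (GL M P) /\
  (forall M' : interp, M' `<` M -> ~ models M' (GL M P)).

(** An ELP rule  H <- B, ¬C, ξ_1..ξ_j, ¬ξ_{j+1}..¬ξ_n  with
    [epos] the epistemic literals ξ (not ℓ, stored as ℓ) occurring positively
    and [eneg] those occurring under negation. *)
Record erule := ERule {
  ehead : {fset atom};
  ebpos : {fset atom};
  ebneg : {fset atom};   (* body literals ¬a *)
  epos  : {fset lit};
  eneg  : {fset lit}
}.

Record elp := ELP { atoms : {fset atom}; elits : {fset lit}; erules : seq erule }.

Definition erule_atoms (r : erule) : {fset atom} :=
  ehead r `|` ebpos r `|` ebneg r `|` [fset lit_atom l | l in epos r]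
  `|` [fset lit_atom l | l in eneg r].

Definition erule_elits (r : erule) : {fset lit} := epos r `|` eneg r.

Definition wf_elp (P : elp) : Prop :=
  [fset lit_atom l | l in elits P] `<=` atoms P /\
  (forall r, List.In r (erules P) ->
     erule_atoms r `<=` atoms P /\ erule_elits r `<=` elits P).

Definition elp_union (P Q : elp) : elp :=
  ELP (atoms P `|` atoms Q) (elits P `|` elits Q) (erules P ++ erules Q).

(** Epistemic reduct of a rule w.r.t. a guess Phi: not ℓ ∈ Phi becomes ⊤,
    other not ℓ become ¬ℓ.  A body element ¬not ℓ with not ℓ ∈ Phi becomes
    ¬⊤ (false body), so the rule is dropped.  ¬not ℓ with not ℓ ∉ Phi becomes
    ¬¬ℓ, i.e. the negated element ¬(negl ℓ) (using ¬¬¬a = ¬a). *)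
Definition ereduct_rule (Phi : {fset lit}) (r : erule) : seq prule :=
  if eneg r `&` Phi != fset0 then [::]
  else [:: PRule (ehead r) (ebpos r)
            ([fset pos_lit c | c in ebneg r] `|` (epos r `\` Phi)
             `|` [fset negl l | l in eneg r])].

Definition ereduct (P : elp) (Phi : {fset lit}) : plain_program :=
  PProg (atoms P) (flatten [seq ereduct_rule Phi r | r <- erules P]).

Definition compatible (Eps Phi : {fset lit}) (W : interp -> Prop) : Prop :=
  (exists I, W I) /\
  (forall l, l \in Phi -> exists2 I, W I & ~ sat_lit I l) /\
  (forall l, l \in Eps -> l \notin Phi -> forall I, W I -> sat_lit I l).

Definition candidate_guess (P : elp) (Phi : {fset lit}) : Prop :=
  Phi `<=` elits P /\ compatible (elits P) Phi (answer_set (ereduct P Phi)).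

Definition world_view (P : elp) (W : interp -> Prop) : Prop :=
  exists Phi, candidate_guess P Phi /\
    (forall Psi, candidate_guess P Psi -> Phi `<=` Psi -> Psi = Phi) /\
    (forall I, W I <-> answer_set (ereduct P Phi) I).

Definition strongly_equivalent (P1 P2 : elp) : Prop :=
  forall Q : elp, wf_elp Q ->
    forall W : interp -> Prop,
      world_view (elp_union P1 Q) W <-> world_view (elp_union P2 Q) W.

Definition tautological (At : {fset atom}) (Eps : {fset lit}) (r : erule) : Prop :=
  strongly_equivalent (ELP At Eps [:: r]) (ELP At Eps [::]).

(** The rule  A <- B, ¬C, not D, not ¬E, ¬not F, ¬not ¬G *)
Definition mkrule (A B C D E F G : {fset atom}) : erule :=
  ERule A B C
    ([fset pos_lit d | d in D] `|` [fset neg_lit e | e in E])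
    ([fset pos_lit f | f in F] `|` [fset neg_lit g | g in G]).

(* Main.v *)
Require Import Defs.
From mathcomp Require Import all_boot finmap.
From Stdlib Require Import ClassicalEpsilon.
Local Open Scope fset_scope.

Definition GLs (I : interp) (s : seq prule) : seq prule :=
  [seq PRule (phead r) (ppos r) fset0 |
     r <- s & all (fun l => ~~ sat_litb I l) (pneg r)].

Lemma models_cat I s1 s2 : models I (s1 ++ s2) <-> models I s1 /\ models I s2.
Proof.
rewrite /models; split.
- by move=> H; split=> r Hr; apply: H; apply: List.in_or_app; [left|right].
- by move=> [H1 H2] r Hr; case: (List.in_app_or _ _ _ Hr) => ?; [apply: H1|apply: H2].
Qed.

Lemma GLs_cat M s1 s2 : GLs M (s1 ++ s2) = GLs M s1 ++ GLs M s2.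
Proof. by rewrite /GLs filter_cat map_cat. Qed.

Lemma models_flatten M M' Phi rs :
  models M' (GLs M (flatten [seq ereduct_rule Phi r | r <- rs])) <->
  forall r, List.In r rs -> models M' (GLs M (ereduct_rule Phi r)).
Proof.
elim: rs => [|r rs IH] /=.
- by split=> // _ r [].
- rewrite GLs_cat models_cat IH; split.
  + by move=> [H1 H2] r' [<-|Hr]; [|apply: H2].
  + by move=> H; split; [apply: H; left | move=> r' Hr; apply: H; right].
Qed.

Lemma sat_negl M l : sat_litb M (negl l) = ~~ sat_litb M l.
Proof. by case: l => [[] a]; rewrite /sat_litb /negl /= ?negbK. Qed.

Definition keep_cond (M : interp) (Phi : {fset lit}) (r : erule) : Prop :=
  (forall c, c \in ebneg r -> c \notin M) /\
  (forall l, l \in epos r -> l \notin Phi -> ~~ sat_litb M l) /\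
  (forall l, l \in eneg r -> sat_litb M l).

Lemma hall_iff M Phi r :
  all (fun l => ~~ sat_litb M l)
    ([fset pos_lit c | c in ebneg r] `|` (epos r `\` Phi) `|` [fset negl l | l in eneg r])
  <-> keep_cond M Phi r.
Proof.
split.
- move/allP=> H; split; [|split].
  + move=> c Hc; have := H (pos_lit c).
    by rewrite !in_fsetU in_imfset //= /sat_litb /=; apply.
  + move=> l Hl Hn; apply: H; by rewrite !in_fsetU in_fsetD Hl Hn /= orbT.
  + move=> l Hl; have := H (negl l).
    by rewrite !in_fsetU (in_imfset _ (fun l => negl l)) ?orbT // sat_negl negbK; apply.
- move=> [H1 [H2 H3]]; apply/allP => l; rewrite !in_fsetU => /orP [/orP [|]|].
  + by move=> /imfsetP [c /= Hc ->]; rewrite /sat_litb /=; apply: H1.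
  + by rewrite in_fsetD => /andP [Hn Hl]; apply: H2.
  + by move=> /imfsetP [l' /= Hl ->]; rewrite sat_negl negbK; apply: H3.
Qed.

Lemma rule_models M M' Phi r :
  models M' (GLs M (ereduct_rule Phi r)) <->
  (eneg r `&` Phi = fset0 -> keep_cond M Phi r -> ebpos r `<=` M' ->
     exists2 a, a \in ehead r & a \in M').
Proof.
rewrite /ereduct_rule; case: ifP => [/eqP h|/negbT/negbNE/eqP h].
- by split => // _ p; rewrite /GLs /=.
- rewrite /GLs /=; case: ifP => hall /=.
  + split.
    * move=> Hm _ _ Hsub; apply: (Hm _ (or_introl erefl)); split => //.
    * move=> H p [<-|[]] [Hsub _]; exact: (H h (proj1 (hall_iff _ _ _) hall) Hsub).
  + split.
    * move=> _ _ /hall_iff; by rewrite hall.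
    * by move=> _ p [].
Qed.

Lemma GL_GLs I P : GL I P = GLs I (prules P).
Proof. by []. Qed.

Lemma AS_equiv At' s1 s2 M :
  (forall M', M' `<=` M -> models M' (GLs M s1)) ->
  answer_set (PProg At' (s1 ++ s2)) M <-> answer_set (PProg At' s2) M.
Proof.
move=> H; rewrite /answer_set !GL_GLs /= GLs_cat.
split.
- move=> [h1 [/models_cat [_ h2] h3]]; split => //; split => // M' HM' Hm.
  apply: (h3 M' HM'); apply/models_cat; split => //; apply: H; exact: fproper_sub.
- move=> [h1 [h2 h3]]; split => //; split.
  + by apply/models_cat; split => //; apply: H; exact: fsubset_refl.
  + by move=> M' HM' /models_cat [_ Hm]; apply: (h3 M' HM').
Qed.

Lemma compat_ext E Phi (W1 W2 : interp -> Prop) :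
  (forall I, W1 I <-> W2 I) -> compatible E Phi W1 -> compatible E Phi W2.
Proof.
move=> H [[I HI] [h2 h3]]; split; first by exists I; apply/H.
split.
- by move=> l /h2 [J HJ HJl]; exists J => //; apply/H.
- by move=> l Hl Hn J /H; apply: h3.
Qed.

Lemma wv_ext P P' :
  elits P = elits P' ->
  (forall Phi M, answer_set (ereduct P Phi) M <-> answer_set (ereduct P' Phi) M) ->
  forall W, world_view P W -> world_view P' W.
Proof.
move=> He Has W [Phi [[Hs Hc] [Hmax Hw]]].
have cg : forall Psi, candidate_guess P' Psi -> candidate_guess P Psi.
  move=> Psi [h1 h2]; split; first by rewrite He.
  by rewrite He; apply: (@compat_ext _ _ _ _ _ h2) => I; rewrite Has.
exists Phi; split; last split.
- split; first by rewrite -He.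
  by rewrite -He; apply: (@compat_ext _ _ _ _ _ Hc) => I; rewrite Has.
- by move=> Psi /cg h; apply: Hmax.
- by move=> I; rewrite Hw Has.
Qed.

Lemma ereduct_cons At Eps r Q Phi :
  ereduct (elp_union (ELP At Eps [:: r]) Q) Phi =
  PProg (At `|` atoms Q)
    (ereduct_rule Phi r ++ prules (ereduct (elp_union (ELP At Eps [::]) Q) Phi)).
Proof. by []. Qed.

Lemma ereduct_nil At Eps Q Phi :
  ereduct (elp_union (ELP At Eps [::]) Q) Phi =
  PProg (At `|` atoms Q) (prules (ereduct (elp_union (ELP At Eps [::]) Q) Phi)).
Proof. by []. Qed.

Lemma taut_of_triv At Eps r :
  (forall Phi M M', M' `<=` M -> models M' (GLs M (ereduct_rule Phi r))) ->
  tautological At Eps r.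
Proof.
move=> H Q _ W.
have Has : forall Phi M,
  answer_set (ereduct (elp_union (ELP At Eps [:: r]) Q) Phi) M <->
  answer_set (ereduct (elp_union (ELP At Eps [::]) Q) Phi) M.
  move=> Phi M; rewrite ereduct_cons [in X in _ <-> X]ereduct_nil.
  by apply: AS_equiv => M'; apply: H.
split; apply: wv_ext => // Phi M; by rewrite Has.
Qed.


Lemma triv_conds A B C D E F G :
  A `&` B != fset0 \/ B `&` (C `|` G) != fset0 \/ C `&` F != fset0 \/
  D `&` F != fset0 \/ E `&` G != fset0 \/ F `&` G != fset0 ->
  forall Phi M M', M' `<=` M -> models M' (GLs M (ereduct_rule Phi (mkrule A B C D E F G))).
Proof.
move=> Hc Phi M M' HM'; apply/rule_models => /= Hne [Hc1 [Hc2 Hc3]] HB.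
have nP : forall l, l \in [fset pos_lit f | f in F] `|` [fset neg_lit g | g in G] -> l \notin Phi.
  move=> l Hl; apply/negP => Hp.
  have : l \in ([fset pos_lit f | f in F] `|` [fset neg_lit g | g in G]) `&` Phi.
    by rewrite in_fsetI Hl Hp.
  by rewrite Hne.
have eF : forall x, x \in F -> pos_lit x \in [fset pos_lit f | f in F] `|` [fset neg_lit g | g in G].
  by move=> x Hx; rewrite in_fsetU (in_imfset _ pos_lit).
have eG : forall x, x \in G -> neg_lit x \in [fset pos_lit f | f in F] `|` [fset neg_lit g | g in G].
  by move=> x Hx; rewrite in_fsetU (in_imfset _ neg_lit) ?orbT.
have pD : forall x, x \in D -> pos_lit x \in [fset pos_lit d | d in D] `|` [fset neg_lit e | e in E].
  by move=> x Hx; rewrite in_fsetU (in_imfset _ pos_lit).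
have pE : forall x, x \in E -> neg_lit x \in [fset pos_lit d | d in D] `|` [fset neg_lit e | e in E].
  by move=> x Hx; rewrite in_fsetU (in_imfset _ neg_lit) ?orbT.
have HF : forall x, x \in F -> x \in M by move=> x /eF /Hc3.
have HG : forall x, x \in G -> x \notin M by move=> x /eG /Hc3.
have HBM : forall x, x \in B -> x \in M by move=> x /(fsubsetP HB) /(fsubsetP HM').
case: Hc => [|[|[|[|[|]]]]] /fset0Pn [x]; rewrite ?in_fsetI ?in_fsetU.
- by move=> /andP [xA xB]; exists x => //; apply: (fsubsetP HB).
- move=> /andP [/HBM xM /orP [/Hc1|/HG]]; by rewrite xM.
- by move=> /andP [/Hc1 xM /HF]; rewrite (negbTE xM).
- move=> /andP [xD xF]; have := Hc2 _ (pD _ xD) (nP _ (eF _ xF)).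
  by rewrite /sat_litb /= HF.
- move=> /andP [xE xG]; have := Hc2 _ (pE _ xE) (nP _ (eG _ xG)).
  by rewrite /sat_litb /= HG.
- by move=> /andP [/HF xM /HG]; rewrite xM.
Qed.

Definition pb (P : Prop) : bool := if excluded_middle_informative P then true else false.
Lemma pbP (P : Prop) : pb P <-> P.
Proof. by rewrite /pb; case: excluded_middle_informative. Qed.

Definition guessOf (E : {fset lit}) (W : interp -> Prop) : {fset lit} :=
  [fset l in E | pb (exists M, W M /\ ~ sat_lit M l)].

Lemma in_guessOf E W l : (l \in guessOf E W) = (l \in E) && pb (exists M, W M /\ ~ sat_lit M l).
Proof. by rewrite /guessOf !inE. Qed.

Lemma compat_unique E Psi W : Psi `<=` E -> compatible E Psi W -> Psi = guessOf E W.
Proof.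
move=> Hs [_ [h2 h3]]; apply/fsetP => l; rewrite in_guessOf.
case Hl: (l \in Psi).
- have -> : l \in E by apply: (fsubsetP Hs).
  by apply/esym/pbP; have [M HM HMl] := h2 _ Hl; exists M.
- case HE: (l \in E) => //=; apply/esym/negbTE/negP => /pbP [M [HM HMl]].
  by apply: HMl; apply: h3 => //; rewrite Hl.
Qed.

Lemma compat_guessOf E W : (exists I, W I) -> compatible E (guessOf E W) W.
Proof.
move=> Hne; split => //; split.
- by move=> l; rewrite in_guessOf => /andP [_ /pbP [M [HM HMl]]]; exists M.
- move=> l HE; rewrite in_guessOf HE /= => Hn I HI; apply/negP => Hs.
  apply: (negP Hn); apply/pbP; exists I; split => //; exact/negP.
Qed.

Lemma InP (T : eqType) (x : T) (s : seq T) : List.In x s <-> x \in s.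
Proof.
elim: s => [|y s IH] //=; rewrite inE; split.
- by move=> [->|/IH h]; [rewrite eqxx | rewrite h orbT].
- by move=> /orP [/eqP ->|/IH h]; [left|right].
Qed.

Definition imp (x y : atom) : erule := ERule [fset x] [fset y] fset0 fset0 fset0.
Definition cnF (f : atom) : erule := ERule fset0 fset0 [fset f] fset0 fset0.
Definition cnG (g : atom) : erule := ERule fset0 [fset g] fset0 fset0 fset0.
Definition fact3 (q0 q1 q2 : atom) : erule := ERule [fset q0; q1; q2] fset0 fset0 fset0 fset0.
Definition Qrules (q0 q1 q2 : atom) (Pairs : {fset atom * atom}) (F G : {fset atom}) : seq erule :=
  fact3 q0 q1 q2 :: [seq imp p.1 p.2 | p <- Pairs] ++ [seq cnF f | f <- F] ++ [seq cnG g | g <- G].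

Definition QM q0 q1 q2 (Pairs : {fset atom * atom}) (F G : {fset atom}) (M M' : interp) : Prop :=
  [/\ q0 \in M' \/ q1 \in M' \/ q2 \in M',
      (forall p, p \in Pairs -> p.2 \in M' -> p.1 \in M'),
      (forall f, f \in F -> f \in M) &
      (forall g, g \in G -> g \notin M')].

Lemma plain_models M M' Phi r : epos r = fset0 -> eneg r = fset0 ->
  models M' (GLs M (ereduct_rule Phi r)) <->
  ((forall c, c \in ebneg r -> c \notin M) -> ebpos r `<=` M' ->
     exists2 a, a \in ehead r & a \in M').
Proof.
move=> h1 h2; rewrite rule_models /keep_cond h1 h2 fset0I; split.
- move=> H Hc Hsub; apply: H => //; split => //; by split => l; rewrite in_fset0.
- by move=> H _ [Hc _]; apply: H.
Qed.

Lemma QM_iff q0 q1 q2 Pairs F G Phi M M' :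
  models M' (GLs M (flatten [seq ereduct_rule Phi r | r <- Qrules q0 q1 q2 Pairs F G]))
  <-> QM q0 q1 q2 Pairs F G M M'.
Proof.
rewrite models_flatten; split.
- move=> H; split.
  + have K := proj1 (plain_models _ _ _ (fact3 q0 q1 q2) erefl erefl) (H _ (or_introl erefl)).
    have [a Ha HaM] : exists2 a, a \in ehead (fact3 q0 q1 q2) & a \in M'.
      by apply: K => [c|]; rewrite /= ?in_fset0 ?fsub0set.
    by move: Ha; rewrite /= !inE => /orP [/orP [/eqP Ha|/eqP Ha]|/eqP Ha]; rewrite -Ha; auto.
  + move=> p Hp Hp2.
    have Hin : List.In (imp p.1 p.2) (Qrules q0 q1 q2 Pairs F G).
      by right; apply: List.in_or_app; left; apply/List.in_map_iff; exists p; split => //; apply/InP.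
    have K := proj1 (plain_models _ _ _ (imp p.1 p.2) erefl erefl) (H _ Hin).
    have [a Ha HaM] : exists2 a, a \in ehead (imp p.1 p.2) & a \in M'.
      by apply: K => [c|]; rewrite /= ?in_fset0 ?fsub1set.
    by move: Ha; rewrite /= inE => /eqP <-.
  + move=> f Hf; apply/negPn/negP => Hn.
    have Hin : List.In (cnF f) (Qrules q0 q1 q2 Pairs F G).
      right; apply: List.in_or_app; right; apply: List.in_or_app; left.
      by apply/List.in_map_iff; exists f; split => //; apply/InP.
    have K := proj1 (plain_models _ _ _ (cnF f) erefl erefl) (H _ Hin).
    have [a Ha HaM] : exists2 a, a \in ehead (cnF f) & a \in M'.
      by apply: K => [c|]; rewrite /= ?inE ?fsub0set // => /eqP ->.
    by move: Ha; rewrite /= in_fset0.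
  + move=> g Hg; apply/negP => Hn.
    have Hin : List.In (cnG g) (Qrules q0 q1 q2 Pairs F G).
      right; apply: List.in_or_app; right; apply: List.in_or_app; right.
      by apply/List.in_map_iff; exists g; split => //; apply/InP.
    have K := proj1 (plain_models _ _ _ (cnG g) erefl erefl) (H _ Hin).
    have [a Ha HaM] : exists2 a, a \in ehead (cnG g) & a \in M'.
      by apply: K => [c|]; rewrite /= ?in_fset0 ?fsub1set.
    by move: Ha; rewrite /= in_fset0.
- move=> [h1 h2 h3 h4] r [<-|Hr].
  + apply/plain_models => // _ _.
    by case: h1 => [h|[h|h]]; eexists; try exact h; rewrite !inE eqxx ?orbT.
  + case: (List.in_app_or _ _ _ Hr) => [/List.in_map_iff [p [<- /InP Hp]]|Hr'].
    * apply/plain_models => //= _; rewrite fsub1set => /(h2 _ Hp) H.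
      by exists p.1; rewrite ?inE.
    case: (List.in_app_or _ _ _ Hr') => [/List.in_map_iff [f [<- /InP Hf]]|/List.in_map_iff [g [<- /InP Hg]]].
    * apply/plain_models => //= /(_ f); rewrite inE eqxx => /(_ erefl).
      by rewrite h3.
    * apply/plain_models => //= _; rewrite fsub1set => Hg'.
      by move: (h4 _ Hg); rewrite Hg'.
Qed.

Definition Qelp At q0 q1 q2 Pairs F G : elp :=
  ELP (At `|` [fset q0; q1; q2]) fset0 (Qrules q0 q1 q2 Pairs F G).

Lemma AS2_iff At Eps q0 q1 q2 Pairs F G Phi M :
  answer_set (ereduct (elp_union (ELP At Eps [::]) (Qelp At q0 q1 q2 Pairs F G)) Phi) M <->
  [/\ M `<=` At `|` (At `|` [fset q0; q1; q2]), QM q0 q1 q2 Pairs F G M M &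
      forall M', M' `<` M -> ~ QM q0 q1 q2 Pairs F G M M'].
Proof.
rewrite /answer_set GL_GLs.
have e : prules (ereduct (elp_union (ELP At Eps [::]) (Qelp At q0 q1 q2 Pairs F G)) Phi)
   = flatten [seq ereduct_rule Phi r | r <- Qrules q0 q1 q2 Pairs F G] by [].
rewrite e QM_iff; split.
- move=> [h1 [h2 h3]]; split => // M' HM' HQ; apply: (h3 M' HM'); exact/QM_iff.
- move=> [h1 h2 h3]; split => //; split => // M' HM' HQ; apply: (h3 M' HM').
  exact: (proj1 (QM_iff _ _ _ _ _ _ Phi _ _) HQ).
Qed.

Lemma AS1_iff At Eps r q0 q1 q2 Pairs F G Phi M :
  answer_set (ereduct (elp_union (ELP At Eps [:: r]) (Qelp At q0 q1 q2 Pairs F G)) Phi) M <->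
  [/\ M `<=` At `|` (At `|` [fset q0; q1; q2]),
      models M (GLs M (ereduct_rule Phi r)) /\ QM q0 q1 q2 Pairs F G M M &
      forall M', M' `<` M -> ~ (models M' (GLs M (ereduct_rule Phi r)) /\ QM q0 q1 q2 Pairs F G M M')].
Proof.
rewrite ereduct_cons /answer_set GL_GLs.
have e : prules (ereduct (elp_union (ELP At Eps [::]) (Qelp At q0 q1 q2 Pairs F G)) Phi)
   = flatten [seq ereduct_rule Phi r | r <- Qrules q0 q1 q2 Pairs F G] by [].
rewrite e.
change (prules (PProg ?a ?b)) with b.
rewrite (GLs_cat M (ereduct_rule Phi r)) models_cat QM_iff; split.
- move=> [h1 [h2 h3]]; split => // M' HM' [Hm HQ]; apply: (h3 M' HM').
  rewrite models_cat; split; [exact Hm | exact (proj2 (QM_iff _ _ _ _ _ _ Phi _ _) HQ)].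
- move=> [h1 h2 h3]; split => //; split => // M' HM'.
  rewrite models_cat => -[Hm HQ]; apply: (h3 M' HM'); split; first exact Hm.
  exact (proj1 (QM_iff _ _ _ _ _ _ Phi _ _) HQ).
Qed.

Lemma wf_Qelp At q0 q1 q2 Pairs F G :
  (forall p, p \in Pairs -> p.1 \in At `|` [fset q0; q1; q2] /\ p.2 \in At `|` [fset q0; q1; q2]) ->
  F `<=` At -> G `<=` At -> wf_elp (Qelp At q0 q1 q2 Pairs F G).
Proof.
move=> HP HF HG; split.
- by apply/fsubsetP => x /imfsetP [l /=]; rewrite in_fset0.
- move=> r Hr; split; last first.
    case: Hr => [<-|Hr]; first by rewrite /erule_elits /= fsetU0.
    case: (List.in_app_or _ _ _ Hr) => [/List.in_map_iff [p [<- _]]|Hr'];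
      first by rewrite /erule_elits /= fsetU0.
    by case: (List.in_app_or _ _ _ Hr') => [/List.in_map_iff [f [<- _]]|/List.in_map_iff [g [<- _]]];
      rewrite /erule_elits /= fsetU0.
  have im0 : forall x, x \in [fset lit_atom l | l in (fset0 : {fset lit})] = false.
    by move=> x; apply/negbTE/negP => /imfsetP [l /=]; rewrite in_fset0.
  apply/fsubsetP => x; rewrite /erule_atoms !in_fsetU.
  case: Hr => [<-|Hr] /=.
    by rewrite !im0 !inE ?orbF => /orP [/orP [|]|] ->; rewrite ?orbT.
  case: (List.in_app_or _ _ _ Hr) => [/List.in_map_iff [p [<- /InP Hp]]|Hr'] /=.
    have [h1 h2] := HP p Hp.
    by rewrite !im0 !inE ?orbF => /orP [/eqP ->|/eqP ->]; [move: h1|move: h2]; rewrite !inE.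
  case: (List.in_app_or _ _ _ Hr') => [/List.in_map_iff [f [<- /InP Hf]]|/List.in_map_iff [g [<- /InP Hg]]] /=.
    by rewrite !im0 !inE ?orbF => /eqP ->; rewrite (fsubsetP HF).
  by rewrite !im0 !inE ?orbF => /eqP ->; rewrite (fsubsetP HG).
Qed.

From mathcomp Require Import zify.

Lemma arith1 n : [/\ n < n -> False, n.+1 < n -> False & n.+2 < n -> False].
Proof. split; lia. Qed.

Lemma arith2 n : [/\ (n == n.+1) = false, (n == n.+2) = false & (n.+1 == n.+2) = false].
Proof. split; lia. Qed.
Lemma arith3 n : [/\ (n.+1 == n) = false, (n.+2 == n) = false & (n.+2 == n.+1) = false].
Proof. split; lia. Qed.

Lemma notproper (M M' : interp) : M `<=` M' -> M' `<` M -> False.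
Proof. by move=> h; rewrite fproperE h andbF. Qed.

Lemma only_if A B C D E F G At Eps :
  wf_elp (ELP At Eps [:: mkrule A B C D E F G]) ->
  tautological At Eps (mkrule A B C D E F G) ->
  (forall x, x \in A -> x \in B -> False) ->
  (forall x, x \in B -> x \in C -> False) ->
  (forall x, x \in B -> x \in G -> False) ->
  (forall x, x \in C -> x \in F -> False) ->
  (forall x, x \in D -> x \in F -> False) ->
  (forall x, x \in E -> x \in G -> False) ->
  (forall x, x \in F -> x \in G -> False) -> False.
Proof.
move=> Hwf Ht nAB nBC nBG nCF nDF nEG nFG.
have [Hat Hel] : erule_atoms (mkrule A B C D E F G) `<=` At /\
                 erule_elits (mkrule A B C D E F G) `<=` Eps.
  by apply: (proj2 Hwf); left.
have hEps : forall l, l \in epos (mkrule A B C D E F G) -> l \in Eps.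
  by move=> l Hl; apply: (fsubsetP Hel); rewrite in_fsetU Hl.
have inAt : forall x, x \in A \/ x \in B \/ x \in C \/ x \in D \/ x \in E \/ x \in F \/ x \in G -> x \in At.
  move=> x Hx; apply: (fsubsetP Hat); rewrite /erule_atoms /= !in_fsetU.
  case: Hx => [->|[->|[->|[h|[h|[h|h]]]]]]; rewrite ?orbT //.
  - have hm : pos_lit x \in [fset pos_lit d | d in D] `|` [fset neg_lit e | e in E].
      by rewrite in_fsetU (in_imfset _ pos_lit).
    by rewrite (in_imfset _ lit_atom hm : lit_atom (pos_lit x) \in _) orbT.
  - have hm : neg_lit x \in [fset pos_lit d | d in D] `|` [fset neg_lit e | e in E].
      by rewrite in_fsetU (in_imfset _ neg_lit) ?orbT.
    by rewrite (in_imfset _ lit_atom hm : lit_atom (neg_lit x) \in _) orbT.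
  - have hm : pos_lit x \in [fset pos_lit f | f in F] `|` [fset neg_lit g | g in G].
      by rewrite in_fsetU (in_imfset _ pos_lit).
    by rewrite (in_imfset _ lit_atom hm : lit_atom (pos_lit x) \in _) orbT.
  - have hm : neg_lit x \in [fset pos_lit f | f in F] `|` [fset neg_lit g | g in G].
      by rewrite in_fsetU (in_imfset _ neg_lit) ?orbT.
    by rewrite (in_imfset _ lit_atom hm : lit_atom (neg_lit x) \in _) orbT.
have sA : A `<=` At by apply/fsubsetP => x hx; apply: inAt; tauto.
have sB : B `<=` At by apply/fsubsetP => x hx; apply: inAt; tauto.
have sC : C `<=` At by apply/fsubsetP => x hx; apply: inAt; tauto.
have sD : D `<=` At by apply/fsubsetP => x hx; apply: inAt; tauto.
have sE : E `<=` At by apply/fsubsetP => x hx; apply: inAt; tauto.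
have sF : F `<=` At by apply/fsubsetP => x hx; apply: inAt; tauto.
have sG : G `<=` At by apply/fsubsetP => x hx; apply: inAt; tauto.
have [n fr] : exists n, forall x, x \in At -> x < n.
  exists (\max_(x <- At) x).+1 => x Hx; rewrite ltnS.
  exact: (@leq_bigmax_seq _ (enum_fset At) xpredT (fun x => x) x Hx).
have nq : forall Y, Y `<=` At -> [/\ (n \in Y) = false, (n.+1 \in Y) = false & (n.+2 \in Y) = false].
  move=> Y HY; have [a0 a1 a2] := arith1 n.
  by split; apply/negbTE/negP => /(fsubsetP HY) /fr; [apply: a0|apply: a1|apply: a2].
have [qA0 qA1 qA2] := nq _ sA.
have [qB0 qB1 qB2] := nq _ sB.
have [qC0 qC1 qC2] := nq _ sC.
have [qD0 qD1 qD2] := nq _ sD.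
have [qE0 qE1 qE2] := nq _ sE.
have [qF0 qF1 qF2] := nq _ sF.
have [qG0 qG1 qG2] := nq _ sG.
have [d01 d02 d12] := arith2 n.
have [d10 d20 d21] := arith3 n.
pose K := A `&` F.
pose Pairs := [fset (x, n) | x in (B `|` F) `\` A] `|` [fset (x, n.+1) | x in F]
   `|` [fset (x, n.+2) | x in F `|` E] `|` (K `*` K).
have inPairs : forall x y, (x, y) \in Pairs ->
   [\/ y = n /\ x \in (B `|` F) `\` A, y = n.+1 /\ x \in F, y = n.+2 /\ x \in F `|` E |
       x \in K /\ y \in K].
  move=> x y; rewrite !in_fsetU in_fsetM /= => /orP [/orP [/orP [|]|]|/andP [h1 h2]].
  - by move=> /imfsetP [z hz [-> ->]]; apply: Or41; split => //; exact hz.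
  - by move=> /imfsetP [z hz [-> ->]]; apply: Or42; split => //; exact hz.
  - by move=> /imfsetP [z hz [-> ->]]; apply: Or43; split => //; rewrite -in_fsetU; exact hz.
  - by apply: Or44.
have P0 : forall x, x \in (B `|` F) `\` A -> (x, n) \in Pairs.
  by move=> x hx; rewrite !in_fsetU (in_imfset _ (fun x => (x, n))).
have P1 : forall x, x \in F -> (x, n.+1) \in Pairs.
  by move=> x hx; rewrite !in_fsetU (in_imfset _ (fun x => (x, n.+1))) ?orbT.
have P2 : forall x, x \in F `|` E -> (x, n.+2) \in Pairs.
  by move=> x hx; rewrite !in_fsetU (in_imfset _ (fun x => (x, n.+2))) ?orbT.
have PK : forall x y, x \in K -> y \in K -> (x, y) \in Pairs.
  by move=> x y hx hy; rewrite !in_fsetU in_fsetM hx hy !orbT.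
pose Q := Qelp At n n.+1 n.+2 Pairs F G.
have wfQ : wf_elp Q.
  apply: wf_Qelp => //; case=> x y /inPairs /=.
  have hK : forall z, z \in K -> z \in At by move=> z; rewrite in_fsetI => /andP [h _]; apply: inAt; tauto.
  have hBF : forall z, z \in B `|` F -> z \in At by move=> z; rewrite in_fsetU => /orP [] h; apply: inAt; tauto.
  case=> [[-> h]|[-> h]|[-> h]|[h1 h2]]; rewrite !inE ?eqxx ?orbT; split => //.
  - by rewrite hBF //; move: h; rewrite in_fsetD => /andP [].
  - by rewrite (fsubsetP sF).
  - by move: h; rewrite !inE => /orP [] h; [rewrite (fsubsetP sF x h)|rewrite (fsubsetP sE x h)].
  - by rewrite hK.
  - by rewrite hK.
pose U := At `|` (At `|` [fset n; n.+1; n.+2]).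
pose S := fun M : interp => [/\ M `<=` U, QM n n.+1 n.+2 Pairs F G M M &
   forall M', M' `<` M -> ~ QM n n.+1 n.+2 Pairs F G M M'].
have inU : forall x, x \in At -> x \in U by move=> x h; rewrite !inE h.
pose J1 := [fset n.+1] `|` F.
have SJ1 : S J1.
  split.
  - apply/fsubsetP => x; rewrite !inE => /orP [/eqP ->|h]; first by rewrite eqxx !orbT.
    by rewrite (fsubsetP sF x h).
  - split.
    + by right; left; rewrite !inE eqxx.
    + case=> x y /inPairs hP; rewrite /= !inE; case: hP => [[-> h]|[-> h]|[-> h]|[h1 h2]].
      * by rewrite d01 qF0.
      * by rewrite (h : x \in F) orbT.
      * by rewrite d21 qF2.
      * by move: h1; rewrite /K in_fsetI => /andP [_ ->]; rewrite orbT.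
    + by move=> f hf; rewrite !inE hf orbT.
    + move=> g hg; rewrite !inE; apply/negP => /orP [/eqP e|h]; last exact: nFG h hg.
      by move: hg; rewrite e qG1.
  - move=> M' hM' [h1 h2 h3 h4].
    have sub := fproper_sub hM'.
    have q1M : n.+1 \in M'.
      case: h1 => [h|[h|h]] //; have := fsubsetP sub _ h; rewrite !inE ?d01 ?qF0 ?d21 ?qF2 //.
    apply: (notproper _ _ _ hM'); apply/fsubsetP => x; rewrite !inE => /orP [/eqP ->//|hx].
    exact: (h2 (x, n.+1) (P1 _ hx) q1M).
pose J2 := [fset n.+2] `|` F `|` E.
have SJ2 : S J2.
  split.
  - apply/fsubsetP => x; rewrite !inE => /orP [/orP [/eqP ->|h]|h]; first by rewrite eqxx !orbT.
    + by rewrite (fsubsetP sF x h).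
    + by rewrite (fsubsetP sE x h).
  - split.
    + by right; right; rewrite !inE eqxx.
    + case=> x y /inPairs hP; rewrite /= !inE; case: hP => [[-> h]|[-> h]|[-> h]|[h1 h2]].
      * by rewrite d02 qF0 qE0.
      * by rewrite d12 qF1 qE1.
      * by move: h; rewrite in_fsetU => /orP [] ->; rewrite ?orbT.
      * by move: h1; rewrite /K in_fsetI => /andP [_ ->]; rewrite orbT.
    + by move=> f hf; rewrite !inE hf orbT.
    + move=> g hg; rewrite !inE; apply/negP => /orP [/orP [/eqP e|h]|h].
      * by move: hg; rewrite e qG2.
      * exact: nFG h hg.
      * exact: nEG h hg.
  - move=> M' hM' [h1 h2 h3 h4].
    have sub := fproper_sub hM'.
    have q2M : n.+2 \in M'.
      case: h1 => [h|[h|h]] //; have := fsubsetP sub _ h; rewrite !inE ?d02 ?qF0 ?qE0 ?d12 ?qF1 ?qE1 //.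
    apply: (notproper _ _ _ hM'); apply/fsubsetP => x; rewrite !inE => /orP [/orP [/eqP ->//|hx]|hx].
    + by apply: (h2 (x, n.+2) (P2 _ _) q2M); rewrite in_fsetU hx.
    + by apply: (h2 (x, n.+2) (P2 _ _) q2M); rewrite in_fsetU hx orbT.
pose PhiS := guessOf (Eps `|` fset0) S.
have AS2 : forall Phi M,
    answer_set (ereduct (elp_union (ELP At Eps [::]) Q) Phi) M <-> S M.
  by move=> Phi M; apply: AS2_iff.
have wv2 : world_view (elp_union (ELP At Eps [::]) Q) S.
  exists PhiS; split; [|split].
  - split; first by apply/fsubsetP => l; rewrite in_guessOf => /andP [].
    apply: (@compat_ext _ _ S); first by move=> I; rewrite AS2.
    by apply: compat_guessOf; exists J1.
  - move=> Psi [hs hc] _; apply: compat_unique => //.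
    by apply: (@compat_ext _ _ _ S _ hc) => I; rewrite AS2.
  - by move=> I; rewrite AS2.
have [Psi [[hs hc] [_ hw]]] := proj2 (Ht Q wfQ S) wv2.
have ePsi : Psi = PhiS.
  apply: compat_unique => //; apply: (@compat_ext _ _ _ S _ hc) => I.
  by split => /hw.
subst Psi.
have hne : eneg (mkrule A B C D E F G) `&` PhiS = fset0.
  apply/fsetP => l; rewrite in_fsetI in_fset0; apply/negbTE/negP => /andP [hl].
  rewrite in_guessOf => /andP [_ /pbP [M [[_ [_ _ hF hG] _] hM]]].
  apply: hM; move: hl; rewrite in_fsetU => /orP [] /imfsetP [x hx ->];
    rewrite /sat_lit /sat_litb /=.
  - exact: (hF x hx).
  - exact: (hG x hx).
have hep : forall l, l \in epos (mkrule A B C D E F G) -> l \in PhiS.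
  move=> l hl; rewrite in_guessOf in_fsetU (hEps _ hl) /=; apply/pbP.
  move: hl; rewrite in_fsetU => /orP [] /imfsetP [x hx ->].
  - have hx' : x \in D := hx.
    exists J1; split => //; rewrite /sat_lit /sat_litb /= !inE => /orP [/eqP e|h].
    + by move: hx'; rewrite e qD1.
    + exact: nDF hx' h.
  - have hx' : x \in E := hx.
    by exists J2; split => //; rewrite /sat_lit /sat_litb /= !inE hx' orbT.
pose I := [fset n] `|` B `|` F.
have keepI : keep_cond I PhiS (mkrule A B C D E F G).
  split; [|split].
  - move=> c hc0 /=; rewrite !inE; apply/negP => /orP [/orP [/eqP e|h]|h].
    + by move: hc0; rewrite e qC0.
    + exact: nBC h hc0.
    + exact: nCF hc0 h.
  - by move=> l /hep h hn; rewrite h in hn.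
  - move=> l /=; rewrite in_fsetU => /orP [] /imfsetP [x hx ->]; rewrite /sat_litb /= !inE.
    + by rewrite (hx : x \in F) orbT.
    + have hx' : x \in G := hx.
      apply/negP => /orP [/orP [/eqP e|h]|h].
      * by move: hx'; rewrite e qG0.
      * exact: nBG h hx'.
      * exact: nFG h hx'.
have IU : I `<=` U.
  apply/fsubsetP => x; rewrite !inE => /orP [/orP [/eqP ->|h]|h]; first by rewrite eqxx !orbT.
  + by rewrite (fsubsetP sB x h).
  + by rewrite (fsubsetP sF x h).
have BI : B `<=` I by apply/fsubsetP => x h; rewrite !inE h orbT.
have q0M : forall M', M' `<=` I -> QM n n.+1 n.+2 Pairs F G I M' -> n \in M'.
  move=> M' sub [h1 _ _ _].
  case: h1 => [h|[h|h]] //; have := fsubsetP sub _ h; rewrite !inE ?d10 ?qB1 ?qF1 ?d20 ?qB2 ?qF2 //.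
have PI : forall x, x \in I -> x \notin A -> x != n -> (x, n) \in Pairs.
  move=> x hx ha hn; apply: P0; rewrite in_fsetD ha /=.
  move: hx; rewrite !inE => /orP [/orP [/eqP e|h]|h]; rewrite ?h ?orbT //.
  by move: hn; rewrite e eqxx.
have [K0|[k hk]] : K = fset0 \/ exists k, k \in K.
  by case: (eqVneq K fset0) => [->|/fset0Pn]; auto.
- have notAI : forall a, a \in A -> a \in I -> False.
    move=> a ha; rewrite !inE => /orP [/orP [/eqP e|h]|h].
    + by move: ha; rewrite e qA0.
    + exact: nAB ha h.
    + have : a \in K by rewrite /K in_fsetI ha h.
      by rewrite K0 in_fset0.
  have SI : S I.
    split => //; first split.
    - by left; rewrite !inE eqxx.
    - case=> x y /inPairs hP; rewrite /=; case: hP => [[-> h]|[-> h]|[-> h]|[h1 h2]].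
      + move=> _; move: h; rewrite in_fsetD in_fsetU !inE => /andP [_ /orP [] ->]; by rewrite ?orbT.
      + by rewrite !inE d10 qB1 qF1.
      + by rewrite !inE d20 qB2 qF2.
      + by move: h1; rewrite K0 in_fset0.
    - by move=> f hf; rewrite !inE hf orbT.
    - move=> g hg; rewrite !inE; apply/negP => /orP [/orP [/eqP e|h]|h].
      + by move: hg; rewrite e qG0.
      + exact: nBG h hg.
      + exact: nFG h hg.
    - move=> M' hM' hQ; have sub := fproper_sub hM'.
      have q0 := q0M M' sub hQ.
      case: hQ => [_ h2 _ _].
      apply: (notproper _ _ _ hM'); apply/fsubsetP => x hx.
      case: (eqVneq x n) => [->//|xn].
      apply: (h2 (x, n) _ q0); apply: PI => //; apply/negP => ha.
      exact: notAI ha hx.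
  have := proj1 (hw I) SI.
  move/AS1_iff => -[_ [hm _] _].
  have [a ha haI] := (proj1 (rule_models _ _ _ _) hm) hne keepI BI.
  exact: notAI ha haI.
- have [kA kF] : k \in A /\ k \in F by move: hk; rewrite /K in_fsetI => /andP.
  have AS1I : answer_set (ereduct (elp_union (ELP At Eps [:: mkrule A B C D E F G]) Q) PhiS) I.
    apply/AS1_iff; split => //.
    - split.
      + by apply/rule_models => _ _ _; exists k => //; rewrite !inE kF orbT.
      + split.
        * by left; rewrite !inE eqxx.
        * case=> x y /inPairs hP; rewrite /=; case: hP => [[-> h]|[-> h]|[-> h]|[h1 h2]].
          -- move=> _; move: h; rewrite in_fsetD in_fsetU !inE => /andP [_ /orP [] ->]; by rewrite ?orbT.
          -- by rewrite !inE d10 qB1 qF1.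
          -- by rewrite !inE d20 qB2 qF2.
          -- by move: h1; rewrite /K in_fsetI => /andP [_ h] _; rewrite !inE h orbT.
        * by move=> f hf; rewrite !inE hf orbT.
        * move=> g hg; rewrite !inE; apply/negP => /orP [/orP [/eqP e|h]|h].
          -- by move: hg; rewrite e qG0.
          -- exact: nBG h hg.
          -- exact: nFG h hg.
    - move=> M' hM' [hm hQ]; have sub := fproper_sub hM'.
      have q0 := q0M M' sub hQ.
      case: hQ => [_ h2 _ _].
      have BM : B `<=` M'.
        apply/fsubsetP => x hx; apply: (h2 (x, n) _ q0); apply: PI.
        + by rewrite !inE hx orbT.
        + by apply/negP => ha; exact: nAB ha hx.
        + by apply/negP => /eqP e; move: hx; rewrite e qB0.
      have [a ha haM] := (proj1 (rule_models _ _ _ _) hm) hne keepI BM.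
      have aK : a \in K.
        move: (fsubsetP sub _ haM); rewrite /K in_fsetI ha !inE /= => /orP [/orP [/eqP e|h]|h] //.
        + by move: ha; rewrite e qA0.
        + by case: (nAB a ha h).
      apply: (notproper _ _ _ hM'); apply/fsubsetP => x hx.
      case: (eqVneq x n) => [->//|xn].
      case ha': (x \in A).
      + apply: (h2 (x, a) _ haM); apply: PK => //.
        move: hx; rewrite /K in_fsetI ha' !inE => /orP [/orP [/eqP e|h]|h] //.
        * by move: xn; rewrite e eqxx.
        * by case: (nAB x ha' h).
      + by apply: (h2 (x, n) _ q0); apply: PI => //; rewrite ha'.
  have [_ _ hmin] := proj2 (hw I) AS1I.
  pose I' := [fset n] `|` ((B `|` F) `\` A).
  apply: (hmin I').
  + rewrite fproperE; apply/andP; split.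
    * apply/fsubsetP => x; rewrite !inE => /orP [/eqP ->|/andP [_ /orP [] h]]; by rewrite ?eqxx ?h ?orbT.
    * apply/negP => /fsubsetP /(_ k); rewrite !inE kF orbT kA /= => /(_ erefl); rewrite ?orbF => /eqP e.
      by move: kA; rewrite e qA0.
  + split.
    * by left; rewrite !inE eqxx.
    * case=> x y /inPairs hP; rewrite /=; case: hP => [[-> h]|[-> h]|[-> h]|[h1 h2]].
      -- by move=> _; rewrite in_fsetU h orbT.
      -- by rewrite !inE d10 qB1 qF1 andbF.
      -- by rewrite !inE d20 qB2 qF2 andbF.
      -- move: h2; rewrite /K in_fsetI => /andP [ya _]; rewrite !inE ya /= orbF => /eqP e.
         by move: ya; rewrite e qA0.
    * by move=> f hf; rewrite !inE hf orbT.
    * move=> g hg; rewrite !inE; apply/negP => /orP [/eqP e|/andP [_ /orP [] h]].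
      -- by move: hg; rewrite e qG0.
      -- exact: nBG h hg.
      -- exact: nFG h hg.
Qed.

Lemma disjE (S T : {fset atom}) : (S `&` T != fset0) = false -> forall x, x \in S -> x \in T -> False.
Proof.
move/negbFE/eqP => h x hS hT.
have : x \in S `&` T by rewrite in_fsetI hS hT.
by rewrite h in_fset0.
Qed.

Theorem theorem4 (A B C D E F G : {fset atom}) (At : {fset atom}) (Eps : {fset lit}) :
  wf_elp (ELP At Eps [:: mkrule A B C D E F G]) ->
  (tautological At Eps (mkrule A B C D E F G) <->
   A `&` B != fset0 \/
   B `&` (C `|` G) != fset0 \/
   C `&` F != fset0 \/
   D `&` F != fset0 \/
   E `&` G != fset0 \/
   F `&` G != fset0).
Proof.
move=> Hwf; split.
- move=> Ht.
  case h1: (A `&` B != fset0); first by left.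
  case h2: (B `&` (C `|` G) != fset0); first by right; left.
  case h3: (C `&` F != fset0); first by right; right; left.
  case h4: (D `&` F != fset0); first by right; right; right; left.
  case h5: (E `&` G != fset0); first by right; right; right; right; left.
  case h6: (F `&` G != fset0); first by right; right; right; right; right.
  exfalso; apply: (only_if _ _ _ _ _ _ _ _ _ Hwf Ht (disjE _ _ h1)).
  + by move=> x hB hC; apply: (disjE _ _ h2 x hB); rewrite in_fsetU hC.
  + by move=> x hB hG; apply: (disjE _ _ h2 x hB); rewrite in_fsetU hG orbT.
  + exact: (disjE _ _ h3).
  + exact: (disjE _ _ h4).
  + exact: (disjE _ _ h5).
  + exact: (disjE _ _ h6).
- by move=> H; apply: taut_of_triv; apply: triv_conds.
Qed.
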